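(* Let $T=S+D$ as in the context. If $T$ is invertible in $\mathcal{L}(X)$, then at least one of the following two inequalities holds: \[ R_{S+D}^{+}:=\lim_{k\to\infty}\left[\sup_{i\in\mathbb{Z}}\left|\frac{\prod_{m=0}^{k-1}w_{i+m}}{\prod_{m=0}^{k}d_{i+m}}\right|\right]^{1/k}\le 1 \qquad\text{or}\qquad R_{S+D}^{-}:=\lim_{k\to\infty}\left[\sup_{i\in\mathbb{Z}}\left|\frac{\prod_{m=1}^{k-1}d_{i-m}}{\prod_{m=1}^{k}w_{i-m}}\right|\right]^{1/k}\le 1 . \]
   Context: $X$ is a separable complex Hilbert space with orthonormal basis $\{e_i\}_{i\in\mathbb{Z}}$. $S$ is the weighted shift $Se_i=w_ie_{i+1}$ ($i\in\mathbb{Z}$) with a bounded weight sequence $\{w_i\}_{i\in\mathbb{Z}}\subset\mathbb{C}$, and $D$ is the bounded diagonal operator $De_i=d_ie_i$ with bounded $\{d_i\}_{i\in\mathbb{Z}}\subset\mathbb{C}$; $T=S+D$. Empty products equal $1$ (e.g. $\prod_{m=1}^{0}d_{i-m}=1$). The limits defining $R^{\pm}_{S+D}$ are taken in $[0,+\infty]$ (assumed to exist), and a supremum is $+\infty$ if some denominator vanishes or the quotients are unbounded. *)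

(* Defs.v *)
From Stdlib Require Import Reals ZArith.
Open Scope R_scope.

Definition Cpx := (R * R)%type.
Definition C0 : Cpx := (0, 0).
Definition C1 : Cpx := (1, 0).
Definition Cadd (a b : Cpx) : Cpx := (fst a + fst b, snd a + snd b).
Definition Cmul (a b : Cpx) : Cpx :=
  (fst a * fst b - snd a * snd b, fst a * snd b + snd a * fst b).
Definition Cmod (a : Cpx) : R := sqrt (fst a ^ 2 + snd a ^ 2).

Fixpoint Cprod (f : nat -> Cpx) (n : nat) : Cpx :=
  match n with
  | O => C1
  | S n' => Cmul (Cprod f n') (f n')
  end.

(* X is identified with l^2(Z) via the orthonormal basis (e_i): e_i = delta_i. *)
Definition seqZ := Z -> Cpx.

Fixpoint psum (x : seqZ) (N : nat) : R :=
  match N with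
  | O => Cmod (x 0%Z) ^ 2
  | S N' => psum x N' + Cmod (x (Z.of_nat N)) ^ 2 + Cmod (x (- Z.of_nat N)%Z) ^ 2
  end.

Definition is_l2 (x : seqZ) : Prop := exists L, forall N, psum x N <= L.

(** the operator T = S + D on sequences:
    S e_i = w_i e_{i+1},  D e_i = d_i e_i,  so
    (T x)_j = w_{j-1} x_{j-1} + d_j x_j. *)
Definition Top (w d : Z -> Cpx) (x : seqZ) : seqZ :=
  fun j => Cadd (Cmul (w (j - 1)%Z) (x (j - 1)%Z)) (Cmul (d j) (x j)).

Definition bounded_seq (a : Z -> Cpx) : Prop := exists M, forall i, Cmod (a i) <= M.

(** T is invertible in L(X): there is a bounded linear operator B on l^2(Z)
    with B T = I and T B = I on l^2(Z). *)
Definition invertible_op (T : seqZ -> seqZ) : Prop :=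
  exists B : seqZ -> seqZ,
    (forall x, is_l2 x -> is_l2 (B x)) /\
    (forall x y, is_l2 x -> is_l2 y ->
        forall j, B (fun i => Cadd (x i) (y i)) j = Cadd (B x j) (B y j)) /\
    (forall (c : Cpx) x, is_l2 x ->
        forall j, B (fun i => Cmul c (x i)) j = Cmul c (B x j)) /\
    (exists M, 0 <= M /\ forall x L, (forall N, psum x N <= L) ->
        forall N, psum (B x) N <= M * L) /\
    (forall x, is_l2 x -> forall j, B (T x) j = x j) /\
    (forall x, is_l2 x -> forall j, T (B x) j = x j).

Inductive ER := Fin (r : R) | PInf.

Definition ER_le (a b : ER) : Prop :=
  match a, b with
  | _, PInf => True
  | PInf, Fin _ => False
  | Fin x, Fin y => x <= y
  end.

Definition is_ER_sup (f : Z -> ER) (s : ER) : Prop :=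
  (forall i, ER_le (f i) s) /\
  (forall u, (forall i, ER_le (f i) u) -> ER_le s u).

Definition ER_root (k : nat) (a : ER) : ER :=
  match a with
  | PInf => PInf
  | Fin x => Fin (if Rle_dec x 0 then 0 else Rpower x (/ INR k))
  end.

Definition ER_lim (u : nat -> ER) (l : ER) : Prop :=
  match l with
  | Fin r => forall eps, 0 < eps -> exists N, forall k, (N <= k)%nat ->
               exists x, u k = Fin x /\ Rabs (x - r) < eps
  | PInf => forall M, exists N, forall k, (N <= k)%nat -> ER_le (Fin M) (u k)
  end.

Definition ER_absquot (num den : Cpx) : ER :=
  if Req_EM_T (Cmod den) 0 then PInf else Fin (Cmod num / Cmod den).

Definition qplus (w d : Z -> Cpx) (k : nat) (i : Z) : ER :=
  ER_absquot (Cprod (fun m => w (i + Z.of_nat m)%Z) k)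
             (Cprod (fun m => d (i + Z.of_nat m)%Z) (S k)).

Definition qminus (w d : Z -> Cpx) (k : nat) (i : Z) : ER :=
  ER_absquot (Cprod (fun m => d (i - Z.of_nat (S m))%Z) (k - 1))
             (Cprod (fun m => w (i - Z.of_nat (S m))%Z) k).

Definition is_R_lim (q : nat -> Z -> ER) (Rl : ER) : Prop :=
  exists a : nat -> ER,
    (forall k, (1 <= k)%nat -> is_ER_sup (q k) (a k)) /\
    ER_lim (fun k => ER_root k (a k)) Rl.

(* Main.v *)
Require Import Defs.
From Stdlib Require Import Reals ZArith Lra Lia Psatz Classical FunctionalExtensionality.
Require Import Defs.
Open Scope R_scope.

Ltac cpx := unfold Cadd, Cmul, C0, C1; simpl; f_equal; ring.

Lemma Cmod_ge0 a : 0 <= Cmod a.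
Proof. unfold Cmod; apply sqrt_pos. Qed.

Lemma Cmod_mul a b : Cmod (Cmul a b) = Cmod a * Cmod b.
Proof.
  destruct a as [a1 a2], b as [b1 b2]; unfold Cmod, Cmul; simpl.
  rewrite <- sqrt_mult by nra. f_equal; ring.
Qed.

Lemma Cmod_C1 : Cmod C1 = 1.
Proof. unfold Cmod, C1; cbn [fst snd]. replace (1 ^ 2 + 0 ^ 2) with 1 by ring. apply sqrt_1. Qed.
Lemma Cmod_C0 : Cmod C0 = 0.
Proof. unfold Cmod, C0; cbn [fst snd]. replace (0 ^ 2 + 0 ^ 2) with 0 by ring. apply sqrt_0. Qed.

Lemma Cmul_C0_r a : Cmul a C0 = C0.
Proof. destruct a; cpx. Qed.
Lemma Cmul_C1_r a : Cmul a C1 = a.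
Proof. destruct a; cpx. Qed.
Lemma Cadd_C0_l a : Cadd C0 a = a.
Proof. destruct a; cpx. Qed.
Lemma Cadd_C0_r a : Cadd a C0 = a.
Proof. destruct a; cpx. Qed.

Lemma Cmul_eq0 a b : Cmul a b = C0 -> b <> C0 -> a = C0.
Proof.
  destruct a as [a1 a2], b as [b1 b2]; unfold Cmul, C0; simpl; intros H Hb.
  injection H as H1 H2.
  assert (Hp : b1*b1 + b2*b2 > 0).
  { destruct (Req_dec b1 0), (Req_dec b2 0); try nra. subst. exfalso; auto. }
  assert (E1 : a1 * (b1*b1+b2*b2) = b1*(a1 * b1 - a2 * b2) + b2*(a1 * b2 + a2 * b1)) by ring.
  assert (E2 : a2 * (b1*b1+b2*b2) = b1*(a1 * b2 + a2 * b1) - b2*(a1 * b1 - a2 * b2)) by ring.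
  rewrite H1, H2 in E1, E2.
  f_equal.
  - apply (Rmult_eq_reg_r (b1*b1+b2*b2)); lra.
  - apply (Rmult_eq_reg_r (b1*b1+b2*b2)); lra.
Qed.

Lemma Cadd_eq0_mod a b : Cadd a b = C0 -> Cmod a = Cmod b.
Proof.
  destruct a as [a1 a2], b as [b1 b2]; unfold Cadd, C0, Cmod; simpl; intros H.
  injection H as H1 H2. f_equal. assert (a1 = - b1) by lra. assert (a2 = -b2) by lra.
  subst; ring.
Qed.

Lemma C1_neq_C0 : C1 <> C0.
Proof. unfold C1, C0; intro H; injection H; lra. Qed.
Lemma C11_neq : Cadd C1 C1 <> C1.
Proof. unfold C1, Cadd; simpl; intro H; injection H; lra. Qed.

Lemma Cmod_C1_of a b : Cmul a b = C1 -> Cmod a * Cmod b = 1.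
Proof. intro H. rewrite <- Cmod_mul, H. apply Cmod_C1. Qed.

Lemma psum_0 x : psum x 0 = Cmod (x 0%Z) ^ 2.
Proof. reflexivity. Qed.
Lemma psum_S x n : psum x (S n) = psum x n + Cmod (x (Z.of_nat (S n))) ^ 2 + Cmod (x (- Z.of_nat (S n))%Z) ^ 2.
Proof. reflexivity. Qed.

Lemma psum_nonneg x n : 0 <= psum x n.
Proof. induction n; [rewrite psum_0; apply pow2_ge_0|rewrite psum_S].
  pose proof (pow2_ge_0 (Cmod (x (Z.of_nat (S n))))); pose proof (pow2_ge_0 (Cmod (x (- Z.of_nat (S n))%Z))); lra. Qed.

Lemma psum_coord x j : Cmod (x j) ^ 2 <= psum x (Z.abs_nat j).
Proof.
  pose proof (Nat2Z.inj_abs_nat j) as Hj.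
  destruct (Z.abs_nat j) as [|n] eqn:E.
  - simpl in Hj. assert (j = 0%Z) by lia. subst. rewrite psum_0. lra.
  - rewrite psum_S.
    pose proof (psum_nonneg x n).
    pose proof (pow2_ge_0 (Cmod (x (Z.of_nat (S n))))).
    pose proof (pow2_ge_0 (Cmod (x (- Z.of_nat (S n))%Z))).
    destruct (Z.abs_spec j) as [[_ A]|[_ A]].
    + assert (j = Z.of_nat (S n)) by lia. subst j. lra.
    + assert (j = - Z.of_nat (S n))%Z by lia. subst j. lra.
Qed.

Lemma psum_le_pw x y N : (forall j, Cmod (x j) <= Cmod (y j)) -> psum x N <= psum y N.
Proof.
  intro H. assert (K : forall j, Cmod (x j) ^ 2 <= Cmod (y j) ^ 2).
  { intro j. pose proof (H j); pose proof (Cmod_ge0 (x j)). nra. }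
  induction N; [rewrite !psum_0; apply K|rewrite !psum_S]. pose proof (K (Z.of_nat (S N))). pose proof (K (- Z.of_nat (S N))%Z). lra.
Qed.

Lemma psum_scale c x N : psum (fun j => Cmul c (x j)) N = Cmod c ^ 2 * psum x N.
Proof. induction N; [rewrite !psum_0|rewrite !psum_S, IHN]; rewrite !Cmod_mul; ring. Qed.

Definition ev (i : Z) : seqZ := fun j => if Z.eq_dec j i then C1 else C0.

Lemma psum_ev i N : psum (ev i) N = if Z.leb (Z.abs i) (Z.of_nat N) then 1 else 0.
Proof.
  induction N; [rewrite psum_0|rewrite psum_S].
  - unfold ev. destruct (Z.eq_dec 0 i); destruct (Z.leb_spec (Z.abs i) (Z.of_nat 0)); simpl in *; try lia;
      rewrite ?Cmod_C1, ?Cmod_C0; lra.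
  - rewrite IHN. unfold ev.
    destruct (Z.eq_dec (Z.of_nat (S N)) i); destruct (Z.eq_dec (- Z.of_nat (S N)) i);
    destruct (Z.leb_spec (Z.abs i) (Z.of_nat N)); destruct (Z.leb_spec (Z.abs i) (Z.of_nat (S N)));
    try lia; rewrite ?Cmod_C1, ?Cmod_C0; lra.
Qed.

Lemma psum_ev_le i N : psum (ev i) N <= 1.
Proof. rewrite psum_ev. destruct (Z.abs i <=? Z.of_nat N)%Z; lra. Qed.

Lemma ev_l2 i : is_l2 (ev i).
Proof. exists 1. apply psum_ev_le. Qed.

Lemma scale_l2 c x : is_l2 x -> is_l2 (fun j => Cmul c (x j)).
Proof. intros [L HL]. exists (Cmod c ^ 2 * L). intro N. rewrite psum_scale.
  apply Rmult_le_compat_l; [apply pow2_ge_0|apply HL]. Qed.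

Lemma Top_ev w d i : Top w d (ev i) = fun j => Cadd (Cmul (d i) (ev i j)) (Cmul (w i) (ev (i+1) j)).
Proof.
  extensionality j. unfold Top, ev.
  destruct (Z.eq_dec (j-1) i); destruct (Z.eq_dec j i); destruct (Z.eq_dec j (i+1)); try lia.
  - subst i. cpx.
  - subst j. cpx.
  - cpx.
Qed.

Lemma Top_ev_at w d v i j : (forall j, Top w d v j = ev i j) ->
  Cadd (Cmul (w (j-1)%Z) (v (j-1)%Z)) (Cmul (d j) (v j)) = if Z.eq_dec j i then C1 else C0.
Proof. intro H. exact (H j). Qed.

Lemma dichot (w d : Z -> Cpx) (B : seqZ -> seqZ)
  (Hl2 : forall x, is_l2 x -> is_l2 (B x))
  (Hsc : forall (c : Cpx) x, is_l2 x -> forall j, B (fun i => Cmul c (x i)) j = Cmul c (B x j))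
  (HBT : forall x, is_l2 x -> forall j, B (Top w d x) j = x j)
  (HTB : forall x, is_l2 x -> forall j, Top w d (B x) j = x j) i :
  (forall j, (j < i)%Z -> B (ev i) j = C0) \/ (forall j, (i <= j)%Z -> B (ev i) j = C0).
Proof.
  set (v := B (ev i)).
  assert (Hv : is_l2 v) by (apply Hl2, ev_l2).
  assert (Tv : forall j, Top w d v j = ev i j) by (apply HTB, ev_l2).
  set (L := fun j => if Z_lt_dec j i then v j else C0).
  set (R := fun j => if Z_lt_dec j i then C0 else v j).
  assert (HL2 : is_l2 L).
  { destruct Hv as [K HK]. exists K. intro N. eapply Rle_trans; [|apply (HK N)].
    apply psum_le_pw. intro j. unfold L. destruct (Z_lt_dec j i); [lra|rewrite Cmod_C0; apply Cmod_ge0]. }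
  assert (HR2 : is_l2 R).
  { destruct Hv as [K HK]. exists K. intro N. eapply Rle_trans; [|apply (HK N)].
    apply psum_le_pw. intro j. unfold R. destruct (Z_lt_dec j i); [rewrite Cmod_C0; apply Cmod_ge0|lra]. }
  set (al := Cmul (w (i-1)%Z) (v (i-1)%Z)).
  set (be := Cmul (d i) (v i)).
  assert (TL : Top w d L = fun j => Cmul al (ev i j)).
  { extensionality j. pose proof (Top_ev_at w d v i j Tv) as T. unfold Top, L, ev in *.
    destruct (Z_lt_dec (j-1) i); destruct (Z_lt_dec j i); destruct (Z.eq_dec j i); try lia.
    - rewrite Cmul_C0_r. exact T.
    - subst j. rewrite Cmul_C0_r, Cadd_C0_r, Cmul_C1_r. reflexivity.
    - rewrite !Cmul_C0_r, Cadd_C0_l. reflexivity. }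
  assert (TR : Top w d R = fun j => Cmul be (ev i j)).
  { extensionality j. pose proof (Top_ev_at w d v i j Tv) as T. unfold Top, R, ev in *.
    destruct (Z_lt_dec (j-1) i); destruct (Z_lt_dec j i); destruct (Z.eq_dec j i); try lia.
    - rewrite !Cmul_C0_r, Cadd_C0_l. reflexivity.
    - subst j. rewrite Cmul_C0_r, Cadd_C0_l, Cmul_C1_r. reflexivity.
    - rewrite Cmul_C0_r. exact T. }
  assert (HL : forall j, L j = Cmul al (v j)).
  { intro j. rewrite <- (HBT L HL2 j), TL. apply Hsc, ev_l2. }
  assert (HR : forall j, R j = Cmul be (v j)).
  { intro j. rewrite <- (HBT R HR2 j), TR. apply Hsc, ev_l2. }
  assert (Hab : Cadd al be = C1).
  { pose proof (Top_ev_at w d v i i Tv) as T. destruct (Z.eq_dec i i); [exact T|lia]. }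
  destruct (classic (exists j, (j < i)%Z /\ v j <> C0)) as [[j [Hj Hvj]]|Hn].
  - destruct (classic (exists k, (i <= k)%Z /\ v k <> C0)) as [[k [Hk Hvk]]|Hn2].
    + exfalso.
      assert (Hbe : be = C0).
      { apply (Cmul_eq0 be (v j)); [|exact Hvj]. rewrite <- HR. unfold R.
        destruct (Z_lt_dec j i); [reflexivity|lia]. }
      assert (Hal : al = C0).
      { apply (Cmul_eq0 al (v k)); [|exact Hvk]. rewrite <- HL. unfold L.
        destruct (Z_lt_dec k i); [lia|reflexivity]. }
      rewrite Hbe, Hal, Cadd_C0_l in Hab. apply C1_neq_C0. auto.
    + right. intros k Hk. apply NNPP. intro H. apply Hn2. exists k. auto.
  - left. intros j Hj. apply NNPP. intro H. apply Hn. exists j. auto.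
Qed.

Definition PP (B : seqZ -> seqZ) i := forall j, (j < i)%Z -> B (ev i) j = C0.
Definition QQ (B : seqZ -> seqZ) i := forall j, (i <= j)%Z -> B (ev i) j = C0.

Lemma Tv_gen (w d : Z -> Cpx) (B : seqZ -> seqZ)
  (HTB : forall x, is_l2 x -> forall j, Top w d (B x) j = x j) i j :
  Cadd (Cmul (w (j-1)%Z) (B (ev i) (j-1)%Z)) (Cmul (d j) (B (ev i) j)) = if Z.eq_dec j i then C1 else C0.
Proof. apply (Top_ev_at w d (B (ev i)) i j). apply HTB, ev_l2. Qed.

Lemma PP_one w d B
  (HTB : forall x, is_l2 x -> forall j, Top w d (B x) j = x j) i :
  PP B i -> Cmul (d i) (B (ev i) i) = C1.
Proof.
  intro H. pose proof (Tv_gen w d B HTB i i) as T. destruct (Z.eq_dec i i); [|lia].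
  rewrite (H (i-1)%Z) in T by lia. rewrite Cmul_C0_r, Cadd_C0_l in T. exact T.
Qed.

Lemma QQ_one w d B
  (HTB : forall x, is_l2 x -> forall j, Top w d (B x) j = x j) i :
  QQ B i -> Cmul (w (i-1)%Z) (B (ev i) (i-1)%Z) = C1.
Proof.
  intro H. pose proof (Tv_gen w d B HTB i i) as T. destruct (Z.eq_dec i i); [|lia].
  rewrite (H i) in T by lia. rewrite Cmul_C0_r, Cadd_C0_r in T. exact T.
Qed.

Lemma ev_rel (w d : Z -> Cpx) (B : seqZ -> seqZ)
  (Hadd : forall x y, is_l2 x -> is_l2 y ->
        forall j, B (fun i => Cadd (x i) (y i)) j = Cadd (B x j) (B y j))
  (Hsc : forall (c : Cpx) x, is_l2 x -> forall j, B (fun i => Cmul c (x i)) j = Cmul c (B x j))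
  (HBT : forall x, is_l2 x -> forall j, B (Top w d x) j = x j) i j :
  ev i j = Cadd (Cmul (d i) (B (ev i) j)) (Cmul (w i) (B (ev (i+1)%Z) j)).
Proof.
  rewrite <- (HBT (ev i) (ev_l2 i) j), Top_ev.
  pose proof (Hadd (fun j => Cmul (d i) (ev i j)) (fun j => Cmul (w i) (ev (i+1)%Z j))
     (scale_l2 _ _ (ev_l2 _)) (scale_l2 _ _ (ev_l2 _)) j) as H. cbv beta in H. rewrite H.
  rewrite !Hsc by apply ev_l2. reflexivity.
Qed.

Lemma PP_step w d B
  (Hl2 : forall x, is_l2 x -> is_l2 (B x))
  (Hadd : forall x y, is_l2 x -> is_l2 y ->
        forall j, B (fun i => Cadd (x i) (y i)) j = Cadd (B x j) (B y j))
  (Hsc : forall (c : Cpx) x, is_l2 x -> forall j, B (fun i => Cmul c (x i)) j = Cmul c (B x j))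
  (HBT : forall x, is_l2 x -> forall j, B (Top w d x) j = x j)
  (HTB : forall x, is_l2 x -> forall j, Top w d (B x) j = x j) i :
  PP B i <-> PP B (i+1)%Z.
Proof.
  pose proof (ev_rel w d B Hadd Hsc HBT i i) as E. unfold ev at 1 in E.
  destruct (Z.eq_dec i i); [|lia].
  split; intro H.
  - destruct (dichot w d B Hl2 Hsc HBT HTB (i+1)%Z) as [H1|H1]; [exact H1|exfalso].
    pose proof (QQ_one w d B HTB _ H1) as Q. replace (i+1-1)%Z with i in Q by lia.
    rewrite Q, (PP_one w d B HTB i H) in E. apply C11_neq. auto.
  - destruct (dichot w d B Hl2 Hsc HBT HTB i) as [H1|H1]; [exact H1|exfalso].
    rewrite (H i) in E by lia. rewrite (H1 i) in E by lia.
    rewrite !Cmul_C0_r, Cadd_C0_l in E. apply C1_neq_C0. auto.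
Qed.

Lemma PP_all w d B
  (Hl2 : forall x, is_l2 x -> is_l2 (B x))
  (Hadd : forall x y, is_l2 x -> is_l2 y ->
        forall j, B (fun i => Cadd (x i) (y i)) j = Cadd (B x j) (B y j))
  (Hsc : forall (c : Cpx) x, is_l2 x -> forall j, B (fun i => Cmul c (x i)) j = Cmul c (B x j))
  (HBT : forall x, is_l2 x -> forall j, B (Top w d x) j = x j)
  (HTB : forall x, is_l2 x -> forall j, Top w d (B x) j = x j) :
  forall i, PP B i <-> PP B 0%Z.
Proof.
  pose proof (PP_step w d B Hl2 Hadd Hsc HBT HTB) as St.
  apply Z.peano_ind.
  - tauto.
  - intros x Hx. rewrite <- Z.add_1_r, <- St. exact Hx.
  - intros x Hx. rewrite <- Hx. rewrite (St (Z.pred x)). replace (Z.pred x + 1)%Z with x by lia. tauto.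
Qed.

Lemma ln_le_ x y : 0 < x -> x <= y -> ln x <= ln y.
Proof. intros Hx Hxy. destruct (Rle_lt_or_eq_dec x y Hxy) as [H|H].
  - left. apply ln_increasing; auto.
  - subst; lra. Qed.

Lemma root_fact k z : (1 <= k)%nat -> 
  exists y, ER_root k (Fin z) = Fin y /\ (y <= 0 \/ (0 < y /\ ln y * INR k = ln z /\ 0 < z)).
Proof.
  intros Hk. unfold ER_root. destruct (Rle_dec z 0).
  - exists 0. split; auto; lra.
  - exists (Rpower z (/ INR k)). split; auto. right. unfold Rpower.
    split; [apply exp_pos|]. rewrite ln_exp. split; [|lra].
    assert (INR k > 0) by (apply lt_0_INR; lia). field. lra.
Qed.

Lemma lim_bound q Rl C : 1 <= C -> (forall k i, (1<=k)%nat -> ER_le (q k i) (Fin C)) ->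
  is_R_lim q Rl -> ER_le Rl (Fin 1).
Proof.
  intros HC Hq [a [Hsup Hlim]].
  assert (Ha : forall k, (1 <= k)%nat -> exists y, ER_root k (a k) = Fin y /\
     (y <= 0 \/ (0 < y /\ ln y * INR k <= ln C))).
  { intros k Hk. destruct (Hsup k Hk) as [_ Hl].
    specialize (Hl (Fin C) (fun i => Hq k i Hk)).
    destruct (a k) as [z|]; [|contradiction]. simpl in Hl.
    destruct (root_fact k z Hk) as [y [E Hy]]. exists y. split; auto.
    destruct Hy as [Hy|[Hy1 [Hy2 Hz]]]; [left; auto|right; split; auto].
    rewrite Hy2. apply ln_le_; auto. }
  assert (lnC : 0 <= ln C).
  { destruct (Rle_lt_or_eq_dec 1 C HC) as [H|H]. - left. rewrite <- ln_1. apply ln_increasing; lra.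
    - subst. rewrite ln_1. lra. }
  destruct Rl as [r|]; simpl.
  - destruct (Rle_dec r 1) as [Hr|Hr]; [exact Hr|exfalso].
    set (eps := (r-1)/2).
    assert (Heps : 0 < eps) by (unfold eps; lra).
    assert (Hl1 : 0 < ln (1+eps)) by (rewrite <- ln_1; apply ln_increasing; lra).
    destruct (INR_archimed (ln (1+eps)) (ln C) Hl1) as [n Hn].
    destruct (Hlim eps Heps) as [N HN].
    set (k := (N + n + 1)%nat).
    destruct (HN k ltac:(unfold k; lia)) as [x [Ex Hx]].
    destruct (Ha k ltac:(unfold k; lia)) as [y [Ey Hy]].
    rewrite Ex in Ey. injection Ey as Ey. subst y.
    assert (Hx1 : 1 + eps < x) by (apply Rabs_def2 in Hx; unfold eps in *; lra).
    destruct Hy as [Hy|[Hy1 Hy2]]; [lra|].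
    assert (ln (1+eps) < ln x) by (apply ln_increasing; lra).
    assert (INR n <= INR k) by (apply le_INR; unfold k; lia).
    assert (0 <= INR n) by apply pos_INR.
    nra.
  - destruct (Hlim (C+1)) as [N HN].
    specialize (HN (N+1)%nat ltac:(lia)).
    destruct (Ha (N+1)%nat ltac:(lia)) as [y [Ey Hy]].
    rewrite Ey in HN. simpl in HN.
    destruct Hy as [Hy|[Hy1 Hy2]]; [lra|].
    assert (ln C < ln y) by (apply ln_increasing; lra).
    assert (1 <= INR (N+1)) by (rewrite plus_INR; simpl; pose proof (pos_INR N); lra).
    nra.
Qed.

Lemma Cprod_S f n : Cprod f (S n) = Cmul (Cprod f n) (f n).
Proof. reflexivity. Qed.
Lemma Cprod_0 f : Cprod f 0 = C1.
Proof. reflexivity. Qed.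

Lemma homog w d B (HTB : forall x, is_l2 x -> forall j, Top w d (B x) j = x j) i j :
  j <> i -> Cmod (w (j-1)%Z) * Cmod (B (ev i) (j-1)%Z) = Cmod (d j) * Cmod (B (ev i) j).
Proof.
  intro H. pose proof (Tv_gen w d B HTB i j) as T. destruct (Z.eq_dec j i); [contradiction|].
  rewrite <- !Cmod_mul. apply Cadd_eq0_mod. exact T.
Qed.

Lemma vbound B M (HM : 0 <= M)
  (Hbd : forall x L, (forall N, psum x N <= L) -> forall N, psum (B x) N <= M * L) i j :
  Cmod (B (ev i) j) <= sqrt M.
Proof.
  rewrite <- (sqrt_pow2 (Cmod (B (ev i) j))) by apply Cmod_ge0.
  apply sqrt_le_1_alt. eapply Rle_trans; [apply psum_coord|].
  eapply Rle_trans; [apply (Hbd (ev i) 1 (psum_ev_le i))|]. lra.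
Qed.

Lemma plus_rel w d B (HTB : forall x, is_l2 x -> forall j, Top w d (B x) j = x j)
  (HP : forall i, PP B i) i k :
  Cmod (Cprod (fun m => d (i + Z.of_nat m)%Z) (S k)) * Cmod (B (ev i) (i + Z.of_nat k)%Z)
  = Cmod (Cprod (fun m => w (i + Z.of_nat m)%Z) k).
Proof.
  induction k.
  - rewrite Cprod_S, !Cprod_0, Cmod_mul, Cmod_C1. replace (i + Z.of_nat 0)%Z with i by lia.
    rewrite Rmult_1_l. apply Cmod_C1_of. apply (PP_one w d B HTB), HP.
  - rewrite Cprod_S; symmetry; rewrite Cprod_S; symmetry; rewrite !Cmod_mul.
    pose proof (homog w d B HTB i (i + Z.of_nat (S k))%Z ltac:(lia)) as H.
    replace (i + Z.of_nat (S k) - 1)%Z with (i + Z.of_nat k)%Z in H by lia.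
    rewrite Rmult_assoc, <- H, <- IHk. ring.
Qed.

Lemma plus_nz w d B (HTB : forall x, is_l2 x -> forall j, Top w d (B x) j = x j)
  (HP : forall i, PP B i) i k :
  Cmod (Cprod (fun m => d (i + Z.of_nat m)%Z) k) <> 0.
Proof.
  induction k.
  - rewrite Cprod_0, Cmod_C1. lra.
  - rewrite Cprod_S, Cmod_mul. apply Rmult_integral_contrapositive_currified; auto.
    pose proof (Cmod_C1_of _ _ (PP_one w d B HTB _ (HP (i + Z.of_nat k)%Z))). intro Z0. rewrite Z0 in H. lra.
Qed.

Lemma minus_rel w d B (HTB : forall x, is_l2 x -> forall j, Top w d (B x) j = x j)
  (HQ : forall i, QQ B i) i n :
  Cmod (Cprod (fun m => w (i - Z.of_nat (S m))%Z) (S n)) * Cmod (B (ev i) (i - Z.of_nat (S n))%Z)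
  = Cmod (Cprod (fun m => d (i - Z.of_nat (S m))%Z) n).
Proof.
  induction n.
  - rewrite Cprod_S, !Cprod_0, Cmod_mul, Cmod_C1. replace (i - Z.of_nat 1)%Z with (i-1)%Z by lia.
    rewrite Rmult_1_l. apply Cmod_C1_of. apply (QQ_one w d B HTB), HQ.
  - rewrite Cprod_S; symmetry; rewrite Cprod_S; symmetry; rewrite !Cmod_mul.
    pose proof (homog w d B HTB i (i - Z.of_nat (S n))%Z ltac:(lia)) as H.
    replace (i - Z.of_nat (S n) - 1)%Z with (i - Z.of_nat (S (S n)))%Z in H by lia.
    rewrite Rmult_assoc, H, <- IHn. ring.
Qed.

Lemma minus_nz w d B (HTB : forall x, is_l2 x -> forall j, Top w d (B x) j = x j)
  (HQ : forall i, QQ B i) i k :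
  Cmod (Cprod (fun m => w (i - Z.of_nat (S m))%Z) k) <> 0.
Proof.
  induction k.
  - rewrite Cprod_0, Cmod_C1. lra.
  - rewrite Cprod_S, Cmod_mul. apply Rmult_integral_contrapositive_currified; auto.
    pose proof (Cmod_C1_of _ _ (QQ_one w d B HTB _ (HQ (i - Z.of_nat k)%Z))) as H.
    replace (i - Z.of_nat k - 1)%Z with (i - Z.of_nat (S k))%Z in H by lia.
    intro Z0. rewrite Z0 in H. lra.
Qed.

Theorem mainTheorem1 (w d : Z -> Cpx) (Rplus Rminus : ER) :
  bounded_seq w -> bounded_seq d ->
  is_R_lim (qplus w d) Rplus ->
  is_R_lim (qminus w d) Rminus ->
  invertible_op (Top w d) ->
  ER_le Rplus (Fin 1) \/ ER_le Rminus (Fin 1).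
Proof.
  intros _ _ Hp Hm [B [Hl2 [Hadd [Hsc [[M [HM Hbd]] [HBT HTB]]]]]].
  pose proof (vbound B M HM Hbd) as Vb.
  assert (HC : 1 <= sqrt M + 1) by (pose proof (sqrt_pos M); lra).
  destruct (classic (PP B 0%Z)) as [H0|H0].
  - left. assert (HP : forall i, PP B i) by (intro i; apply (PP_all w d B Hl2 Hadd Hsc HBT HTB); auto).
    apply (lim_bound (qplus w d) Rplus (sqrt M + 1) HC); [|exact Hp].
    intros k i _. unfold qplus, ER_absquot.
    destruct (Req_EM_T _ 0) as [E|E]; [exfalso; exact (plus_nz w d B HTB HP i (S k) E)|].
    cbn [ER_le]. rewrite <- (plus_rel w d B HTB HP i k).
    replace (Cmod (Cprod (fun m : nat => d (i + Z.of_nat m)%Z) (S k)) *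
      Cmod (B (ev i) (i + Z.of_nat k)%Z) / Cmod (Cprod (fun m : nat => d (i + Z.of_nat m)%Z) (S k)))
      with (Cmod (B (ev i) (i + Z.of_nat k)%Z)) by (field; exact E).
    pose proof (Vb i (i + Z.of_nat k)%Z). lra.
  - right. assert (HQ : forall i, QQ B i).
    { intro i. destruct (dichot w d B Hl2 Hsc HBT HTB i) as [H|H]; [|exact H].
      exfalso. apply H0. apply (PP_all w d B Hl2 Hadd Hsc HBT HTB i). exact H. }
    apply (lim_bound (qminus w d) Rminus (sqrt M + 1) HC); [|exact Hm].
    intros k i Hk. destruct k as [|n]; [lia|]. unfold qminus, ER_absquot.
    destruct (Req_EM_T _ 0) as [E|E]; [exfalso; exact (minus_nz w d B HTB HQ i (S n) E)|].
    cbn [ER_le]. replace (S n - 1)%nat with n by lia. rewrite <- (minus_rel w d B HTB HQ i n).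
    replace (Cmod (Cprod (fun m : nat => w (i - Z.of_nat (S m))%Z) (S n)) *
      Cmod (B (ev i) (i - Z.of_nat (S n))%Z) / Cmod (Cprod (fun m : nat => w (i - Z.of_nat (S m))%Z) (S n)))
      with (Cmod (B (ev i) (i - Z.of_nat (S n))%Z)) by (field; exact E).
    pose proof (Vb i (i - Z.of_nat (S n))%Z). lra.
Qed.
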